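(* Let $S_1\subseteq S_2$ be strongly $E^*$-unitary inverse semigroups with zero with $S_1\subseteq_cS_2$, let $\varphi:S_2\setminus\{0\}\to G$ be a grading, and let $E_{k,g}$, $\phi_{k,g}$ and the induced partial actions of $G$ on $\mathcal T_c(E_k)$ be as in the context. Suppose that for all $x,y\in E_1$ and $s\in S_2$ there exists $s'\in S_1$ with $xsy\le s'$. Then for all $g\in G$, $x,y\in E_1$ and $a\in E_{2,g^{-1}}$ there exists $Z\in\mathcal T_c(E_{1,g})$ with $V_x\cap\tilde\phi_{2,g}(V_y\cap V_a)\le Z$.
   Context: For an inverse semigroup $S$ with zero, $E$ is its semilattice of idempotents; the natural order on $S$ is $x\le y\iff x=ey$ for some $e\in E$. $S$ is strongly $E^*$-unitary via $\varphi:S\setminus\{0\}\to G$ if $\varphi^{-1}(1_G)=E\setminus\{0\}$ and $\varphi(ab)=\varphi(a)\varphi(b)$ whenever $ab\ne0$; a grading on $S_2$ restricts to one on $S_1$. For a semilattice $P$ with $0$: a cover of $x$ is a finite $\{x_i\}$ with $x_i\le x$ meeting nontrivially every nonzero $y\le x$; tight filters contain a member of each cover of each of their elements; $V_x$ is the set of tight filters containing $x$, and $\mathcal T_c(P)$ is the generalized Boolean algebra of compact open subsets of the tight spectrum. $S_1\subseteq_cS_2$ means $S_1$ is an inverse subsemigroup and every cover in $E_1$ is a cover in $E_2$; then $V^{E_1}_x\mapsto V^{E_2}_x$ identifies $\mathcal T_c(E_1)\subseteq\mathcal T_c(E_2)$. For $k=1,2$: $E_{k,g}=\{x\in E_k:x\le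 ss^*\text{ for some }s\in S_k,\ \varphi(s)=g\}$, $\phi_{k,g}(x)=sxs^*$ for $x\in E_{k,g^{-1}}$ (any $s\in S_k$ with $\varphi(s)=g$, $x\le s^*s$); $\mathcal T_c(E_{k,g})$ denotes the ideal of $\mathcal T_c(E_k)$ generated by $\{V_x:x\in E_{k,g}\}$, and $\tilde\phi_{k,g}:\mathcal T_c(E_{k,g^{-1}})\to\mathcal T_c(E_{k,g})$ is the isomorphism generated by $V_x\mapsto V_{\phi_{k,g}(x)}$. *)

(* Defs.v *)
From Stdlib Require Import List.
Import ListNotations.
Set Implicit Arguments.

Record ISG := {
  isg_car :> Type;
  smul : isg_car -> isg_car -> isg_car;
  szero : isg_car;
  sinv : isg_car -> isg_car;
  smulA : forall a b c, smul a (smul b c) = smul (smul a b) c;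
  smul0l : forall a, smul szero a = szero;
  smul0r : forall a, smul a szero = szero;
  sinv_inv1 : forall a, smul (smul a (sinv a)) a = a;
  sinv_inv2 : forall a, smul (smul (sinv a) a) (sinv a) = sinv a;
  sinv_uniq : forall a b, smul (smul a b) a = a -> smul (smul b a) b = b -> b = sinv a
}.
Arguments smul {_}. Arguments szero {_}. Arguments sinv {_}.

Record Group := {
  grp_car :> Type;
  gmul : grp_car -> grp_car -> grp_car;
  gone : grp_car;
  ginv : grp_car -> grp_car;
  gmulA : forall a b c, gmul a (gmul b c) = gmul (gmul a b) c;
  gmul1l : forall a, gmul gone a = a;
  gmul1r : forall a, gmul a gone = a;
  gmulVl : forall a, gmul (ginv a) a = gone;
  gmulVr : forall a, gmul a (ginv a) = gone
}.
Arguments gmul {_}. Arguments gone {_}. Arguments ginv {_}.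

Definition subsemi {S : ISG} (P : S -> Prop) : Prop :=
  P szero /\ (forall a b, P a -> P b -> P (smul a b)) /\ (forall a, P a -> P (sinv a)).

Definition full (S : ISG) : S -> Prop := fun _ => True.

Definition Idem {S : ISG} (P : S -> Prop) : S -> Prop := fun x => P x /\ smul x x = x.

Definition nle {S : ISG} (x y : S) : Prop :=
  exists e, Idem (full S) e /\ x = smul e y.

(** Strongly E*-unitary grading (phi only matters on S \ {0}) *)
Definition grading {S : ISG} {G : Group} (phi : S -> G) : Prop :=
  (forall s, s <> szero -> (phi s = gone <-> smul s s = s)) /\
  (forall a b, smul a b <> szero -> phi (smul a b) = gmul (phi a) (phi b)).

(** * Semilattice E (a predicate on S; meet = product) *)
Definition is_cover {S : ISG} (E : S -> Prop) (x : S) (zs : list S) : Prop :=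
  Forall (fun z => E z /\ nle z x) zs /\
  (forall y, E y -> y <> szero -> nle y x -> Exists (fun z => smul y z <> szero) zs).

Definition is_filter {S : ISG} (E : S -> Prop) (F : S -> Prop) : Prop :=
  (forall x, F x -> E x) /\ (exists x, F x) /\ ~ F szero /\
  (forall x y, F x -> E y -> nle x y -> F y) /\
  (forall x y, F x -> F y -> F (smul x y)).

Definition tight {S : ISG} (E : S -> Prop) (F : S -> Prop) : Prop :=
  is_filter E F /\ (forall x zs, F x -> is_cover E x zs -> Exists F zs).

Definition fsets (S : ISG) := (S -> Prop) -> Prop.
Definition empty (S : ISG) : fsets S := fun _ => False.
Definition union {S : ISG} (A B : fsets S) : fsets S := fun F => A F \/ B F.
Definition inter {S : ISG} (A B : fsets S) : fsets S := fun F => A F /\ B F.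
Definition diff {S : ISG} (A B : fsets S) : fsets S := fun F => A F /\ ~ B F.
Definition incl {S : ISG} (A B : fsets S) : Prop := forall F, A F -> B F.

Definition V {S : ISG} (E : S -> Prop) (x : S) : fsets S := fun F => tight E F /\ F x.

(** Topology of the tight spectrum (subspace of {0,1}^E): basic open sets *)
Definition basic {S : ISG} (E : S -> Prop) (xs ys : list S) : fsets S :=
  fun F => tight E F /\ Forall F xs /\ Forall (fun y => ~ F y) ys.

Definition is_open {S : ISG} (E : S -> Prop) (A : fsets S) : Prop :=
  (forall F, A F -> tight E F) /\
  (forall F, A F -> exists xs ys, basic E xs ys F /\ incl (basic E xs ys) A).

Definition is_compact {S : ISG} (E : S -> Prop) (A : fsets S) : Prop :=
  forall (I : Type) (U : I -> fsets S), (forall i, is_open E (U i)) ->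
    (forall F, A F -> exists i, U i F) ->
    exists l : list I, forall F, A F -> exists i, In i l /\ U i F.

Definition Tc {S : ISG} (E : S -> Prop) (A : fsets S) : Prop :=
  is_open E A /\ is_compact E A.

Definition is_ideal {S : ISG} (E : S -> Prop) (I : fsets S -> Prop) : Prop :=
  I (empty S) /\ (forall A, I A -> Tc E A) /\
  (forall A B, I A -> I B -> I (union A B)) /\
  (forall A B, Tc E A -> I B -> incl A B -> I A).

Definition gen_ideal {S : ISG} (E : S -> Prop) (Gen : fsets S -> Prop) (A : fsets S) : Prop :=
  Tc E A /\ forall I, is_ideal E I -> (forall B, Gen B -> I B) -> I A.

Definition Eg {S : ISG} {G : Group} (P : S -> Prop) (phi : S -> G) (g : G) (x : S) : Prop :=
  Idem P x /\ exists s, P s /\ s <> szero /\ phi s = g /\ nle x (smul s (sinv s)).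

Definition Tcg {S : ISG} {G : Group} (P : S -> Prop) (phi : S -> G) (g : G) : fsets S -> Prop :=
  gen_ideal (Idem P) (fun B => exists x, Eg P phi g x /\ B = V (Idem P) x).

Definition bhom {S : ISG} (D C : fsets S -> Prop) (h : fsets S -> fsets S) : Prop :=
  (forall A, D A -> C (h A)) /\
  (forall A B, D A -> D B ->
     h (union A B) = union (h A) (h B) /\
     h (inter A B) = inter (h A) (h B) /\
     h (diff A B) = diff (h A) (h B)).

Definition biso {S : ISG} (D C : fsets S -> Prop) (h : fsets S -> fsets S) : Prop :=
  bhom D C h /\ (forall A B, D A -> D B -> h A = h B -> A = B) /\
  (forall B, C B -> exists A, D A /\ h A = B).

(** h is the isomorphism tilde-phi_{2,g} : T_c(E_{2,g^-1}) -> T_c(E_{2,g})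
    generated by V_x |-> V_{s x s^*} *)
Definition is_phitilde {S : ISG} {G : Group} (phi : S -> G) (g : G) (h : fsets S -> fsets S) : Prop :=
  biso (Tcg (full S) phi (ginv g)) (Tcg (full S) phi g) h /\
  (forall x s, Idem (full S) x -> s <> szero -> phi s = g -> nle x (smul (sinv s) s) ->
     h (V (Idem (full S)) x) = V (Idem (full S)) (smul (smul s x) (sinv s))).

(** S1 <=_c S2 (S2 = all of S) *)
Definition cover_sub {S : ISG} (S1 : S -> Prop) : Prop :=
  subsemi S1 /\
  (forall x zs, Idem S1 x -> is_cover (Idem S1) x zs -> is_cover (Idem (full S)) x zs).

(** the identification T_c(E_1) -> T_c(E_2) generated by V^{E1}_x |-> V^{E2}_x *)
Definition is_iota {S : ISG} (S1 : S -> Prop) (iota : fsets S -> fsets S) : Prop :=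
  bhom (Tc (Idem S1)) (Tc (Idem (full S))) iota /\
  (forall A B, Tc (Idem S1) A -> Tc (Idem S1) B -> iota A = iota B -> A = B) /\
  (forall x, Idem S1 x -> iota (V (Idem S1) x) = V (Idem (full S)) x).

(* Main.v *)
From Stdlib Require Import List Classical FunctionalExtensionality PropExtensionality.
Require Import Defs.


Module Topo.
From HB Require Import structures.
From mathcomp Require Import all_boot all_order all_algebra all_classical topology.
From mathcomp Require Import finmap.
Local Open Scope classical_set_scope.

Lemma in_In {T : eqType} (x : T) (s : seq T) : x \in s -> List.In x s.
Proof. elim: s => [|a s IH] //=; rewrite in_cons => /orP [/eqP ->|/IH]; auto. Qed.

Lemma fcons {A : Type} {P : A -> Prop} {a l} : List.Forall P (a :: l) -> P a /\ List.Forall P l.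
Proof. move=> H; split; [exact: List.Forall_inv H | exact: List.Forall_inv_tail H]. Qed.

HB.instance Definition _ (T : Type) := isPointed.Build (prod_topology (fun _ : T => bool)) (fun _ => true).

Lemma in_In_fset {T : choiceType} (x : T) (A : {fset T}) : [set` A] x -> List.In x A.
Proof. move=> H; apply: in_In; exact: H. Qed.

Section T.
Variable S : ISG.
Local Notation X := (prod_topology (fun _ : {classic S} => bool)).
Definition Bs (xs ys : list S) : set X :=
  [set f | List.Forall (fun x => f x = true) xs /\ List.Forall (fun y => f y = false) ys].

Lemma nbhs_coord (f : X) (x : S) : nbhs f [set g : X | g x = f x].
Proof.
have := @proj_continuous {classic S} (fun _ => bool) x f.
move=> /(_ [set f x]); apply.
by rewrite nbhs_principalE; apply/principal_filterP.
Qed.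

Lemma Bs_nbhs xs ys f : Bs xs ys f -> nbhs f (Bs xs ys).
Proof.
elim: xs => [|x xs IH].
- elim: ys => [|y ys IHy].
  + move=> _; apply: (@filterS _ (nbhs f) (nbhs_filter f) setT); last exact: (@filterT _ _ (nbhs_filter f)).
    by move=> g _; split; constructor.
  + move=> [_ Hy0]; have [fy Hys] := fcons Hy0.
    have HH := @filterI _ (nbhs f) (nbhs_filter f) _ _ (nbhs_coord f y) (IHy (conj (List.Forall_nil _) Hys)).
    apply: (@filterS _ (nbhs f) (nbhs_filter f) _ _ _ HH) => g [gy [_ Hg]]; split => //; constructor => //; by rewrite gy.
- move=> [Hx0 Hys]; have [fx Hxs] := fcons Hx0.
  have HH := @filterI _ (nbhs f) (nbhs_filter f) _ _ (nbhs_coord f x) (IH (conj Hxs Hys)).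
  apply: (@filterS _ (nbhs f) (nbhs_filter f) _ _ _ HH) => g [gx [Hg1 Hg2]]; split => //; constructor => //; by rewrite gx.
Qed.

Arguments Bs_nbhs {xs ys f}.

Definition Kset (E : S -> Prop) (z : S) : set X :=
  [set f | f z = true /\ tight E (fun x => f x = true)].

Lemma K_closed (E : S -> Prop) (z : S) : closed (Kset E z).
Proof.
move=> f cl.
have H : forall xs ys, Bs xs ys f -> exists g, Kset E z g /\ Bs xs ys g.
  move=> xs ys Bf; have [g [Kg Bg]] := cl _ (Bs_nbhs Bf); by exists g.
have fz : f z = true.
  case fz: (f z) => //.
  have [g [[gz _] [_ Hy]]] : exists g, Kset E z g /\ Bs [::] [:: z] g.
    by apply: H; split; repeat constructor.
  by move: Hy => /fcons [] ; rewrite gz.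
split => //.
split; [split; [|split; [|split; [|split]]]|].
- move=> x fx.
  have [g [[_ [[HE _] _]] [Hx _]]] : exists g, Kset E z g /\ Bs [:: x] [::] g.
    by apply: H; split; repeat constructor.
  by apply: HE; move: Hx => /fcons [].
- by exists z.
- move=> f0.
  have [g [[_ [[_ [_ [Hn _]]] _]] [Hx _]]] : exists g, Kset E z g /\ Bs [:: szero] [::] g.
    by apply: H; split; repeat constructor.
  by apply: Hn; move: Hx => /fcons [].
- move=> x y fx Ey xy; case fy: (f y) => //.
  have [g [[_ [[_ [_ [_ [Hu _]]]] _]] [Hx Hy]]] : exists g, Kset E z g /\ Bs [:: x] [:: y] g.
    by apply: H; split; repeat constructor.
  move: Hx Hy => /fcons [gx _] /fcons [gy _].
  by move: (Hu x y gx Ey xy); rewrite gy.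
- move=> x y fx fy; case fxy: (f (smul x y)) => //.
  have [g [[_ [[_ [_ [_ [_ Hm]]]] _]] [Hx Hy]]] : exists g, Kset E z g /\ Bs [:: x; y] [:: smul x y] g.
    by apply: H; split; repeat constructor.
  move: Hx Hy => /fcons [gx /fcons [gy _]] /fcons [gxy _].
  by move: (Hm x y gx gy); rewrite gxy.
- move=> x zs fx cov.
  case: (pselect (List.Exists (fun w => f w = true) zs)) => // N; exfalso.
  have Hf : List.Forall (fun w => f w = false) zs.
    apply: List.Forall_impl (proj2 (List.Forall_Exists_neg _ _) N) => w.
    by case: (f w).
  have [g [[_ [_ Ht]] [Hx Hy]]] : exists g, Kset E z g /\ Bs [:: x] zs g.
    by apply: H; split; repeat constructor.
  move: Hx => /fcons [gx _].
  have := Ht x zs gx cov.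
  move=> /List.Exists_exists [w [wi gw]].
  by move: Hy => /List.Forall_forall /(_ w wi); rewrite gw.
Qed.

Lemma K_compact (E : S -> Prop) (z : S) : compact (Kset E z).
Proof.
apply: (@subclosed_compact _ _ setT (K_closed E z)) => //.
have := @tychonoff _ (fun _ : {classic S} => bool) _ (fun=> bool_compact).
by congr (compact _); rewrite eqEsubset.
Qed.

Lemma V_compact (E : S -> Prop) (z : S) : is_compact E (V E z).
Proof.
move=> I U Uop Ucov.
pose W (i : {classic I}) : set X :=
  [set f | exists xs ys, Bs xs ys f /\ Defs.incl (basic E xs ys) (U i)].
have Wop : forall i, setT i -> open (W i).
  move=> i _; rewrite openE => f [xs [ys [Bf inc]]].
  by apply: (@filterS _ _ (nbhs_filter f) _ _ _ (Bs_nbhs Bf)) => g Bg; exists xs, ys.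
have KW : Kset E z `<=` cover setT W.
  move=> f [fz ft].
  have [i Ui] := Ucov (fun x => f x = true) (conj ft fz).
  have [_ Hi] := Uop i.
  have [xs [ys [[_ [Hx Hy]] inc]]] := Hi _ Ui.
  exists i => //; exists xs, ys; split => //; split => //.
  by apply: List.Forall_impl Hy => y; case: (f y).
have cK : cover_compact (Kset E z) := eq_ind compact (fun P => P (Kset E z)) (K_compact E z) _ (@compact_cover X).
have [D' _ HD'] := cK _ setT W Wop KW.
exists (enum_fset D') => F [Ft Fz].
pose f : X := fun x => `[< F x >].
have fE : (fun x => f x = true) = F.
  apply: funext => x; apply: propext; split; [move/asboolP | move=> ?; apply/asboolP] => //.
have Kf : Kset E z f by split; [apply/asboolP | rewrite fE].
have [i Di [xs [ys [[Bx By] inc]]]] := HD' f Kf.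
exists i; split; first exact: in_In_fset.
apply: inc; split => //; split.
- by apply: List.Forall_impl Bx => x /asboolP.
- by apply: List.Forall_impl By => x /negbT /asboolPn.
Qed.
End T.
End Topo.


Ltac ra := repeat rewrite <- smulA.

Section Alg.
Variable S : ISG.
Local Notation "a ** b" := (smul a b) (at level 40, left associativity).
Local Notation "a ^*" := (sinv a) (at level 2).

Lemma sinvK (a : S) : a^*^* = a.
Proof. symmetry. apply sinv_uniq; [apply sinv_inv2 | apply sinv_inv1]. Qed.

Lemma idem_sinv (e : S) : e ** e = e -> e^* = e.
Proof. intro H. symmetry. apply sinv_uniq; rewrite H; exact H. Qed.

Lemma idr (e w : S) : e ** e = e -> e ** (e ** w) = e ** w.
Proof. intro H. rewrite smulA, H. reflexivity. Qed.

Lemma idem_mul (e f : S) : e ** e = e -> f ** f = f -> (e ** f) ** (e ** f) = e ** f.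
Proof.
  intros He Hf.
  set (x := (e ** f)^*).
  assert (Hx : f ** x ** e = x).
  { unfold x. apply sinv_uniq.
    - transitivity ((e**f) ** (e ** f)^* ** (e**f)).
      + ra. rewrite (idr f _ Hf), (idr e _ He). reflexivity.
      + apply sinv_inv1.
    - transitivity (f ** ((e ** f)^* ** (e ** f) ** (e ** f)^*) ** e).
      + ra. rewrite (idr f _ Hf), (idr e _ He). reflexivity.
      + rewrite sinv_inv2. reflexivity. }
  assert (Hxx : x ** x = x).
  { rewrite <- Hx at 1 2.
    transitivity (f ** (x ** (e ** f) ** x) ** e).
    + ra. reflexivity.
    + unfold x. rewrite sinv_inv2. exact Hx. }
  assert (E1 : e ** f = x).
  { rewrite <- (sinvK (e ** f)). fold x. apply idem_sinv. exact Hxx. }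
  rewrite E1. exact Hxx.
Qed.

Lemma idem_comm (e f : S) : e ** e = e -> f ** f = f -> e ** f = f ** e.
Proof.
  intros He Hf.
  assert (H1 := idem_mul e f He Hf).
  assert (H2 := idem_mul f e Hf He).
  assert (Hfe : f ** e = (e ** f)^* ).
  { apply sinv_uniq.
    - transitivity ((e ** f) ** (e ** f)).
      + ra. rewrite (idr f _ Hf), (idr e _ He). reflexivity.
      + exact H1.
    - transitivity ((f ** e) ** (f ** e)).
      + ra. rewrite (idr e _ He), (idr f _ Hf). reflexivity.
      + exact H2. }
  rewrite Hfe, idem_sinv; [reflexivity | exact H1].
Qed.

Lemma inv1r (a w : S) : a ** (a^* ** (a ** w)) = a ** w.
Proof. rewrite !smulA, sinv_inv1. reflexivity. Qed.

Lemma sinv_idem (a : S) : (a ** a^*) ** (a ** a^*) = a ** a^*.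
Proof. rewrite smulA, sinv_inv1. reflexivity. Qed.

Lemma sinv_idem2 (a : S) : (a^* ** a) ** (a^* ** a) = a^* ** a.
Proof. rewrite smulA, sinv_inv2. reflexivity. Qed.

Lemma conj_idem (s f : S) : f ** f = f -> (s ** f ** s^*) ** (s ** f ** s^*) = s ** f ** s^*.
Proof.
  intro Hf.
  transitivity (s ** ((f ** (s^* ** s)) ** (f ** s^*))).
  - ra. reflexivity.
  - rewrite (idem_comm f (s^* ** s) Hf (sinv_idem2 s)). ra.
    rewrite (idr f _ Hf), inv1r. reflexivity.
Qed.
End Alg.

Lemma ginv_uniq (G : Group) (a b : G) : gmul a b = gone -> b = ginv a.
Proof.
  intro H. rewrite <- (gmul1l _ b), <- (gmulVl _ a), <- gmulA, H, gmul1r. reflexivity.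
Qed.

Lemma ginvK (G : Group) (a : G) : ginv (ginv a) = a.
Proof. symmetry. apply ginv_uniq. apply gmulVl. Qed.


Theorem theorem5p7 (S : ISG) (G : Group) (S1 : S -> Prop) (phi : S -> G)
  (hgr : grading phi)
  (hc : cover_sub S1)
  (hyp : forall x y s, Idem S1 x -> Idem S1 y ->
           exists s', S1 s' /\ nle (smul (smul x s) y) s')
  (iota : fsets S -> fsets S) (hiota : is_iota S1 iota) :
  forall (g : G) (h : fsets S -> fsets S), is_phitilde phi g h ->
  forall x y a, Idem S1 x -> Idem S1 y -> Eg (full S) phi (ginv g) a ->
  exists Z, Tcg S1 phi g Z /\
    incl (inter (V (Idem (full S)) x)
                (h (inter (V (Idem (full S)) y) (V (Idem (full S)) a))))
         (iota Z).
Proof.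
  intros g h [hbiso hV] x y a Hx Hy [Ha [t [_ [Ht0 [Htg Hat]]]]].
  destruct hgr as [hg1 hg2].
  destruct hc as [[P0 [Pmul Pinv]] _].
  assert (Htt0 : smul t (sinv t) <> szero).
  { intro H. apply Ht0. rewrite <- (sinv_inv1 _ t), H, smul0l. reflexivity. }
  assert (Hs0 : sinv t <> szero).
  { intro H. apply Ht0. rewrite <- (sinv_inv1 _ t), H, smul0r, smul0l. reflexivity. }
  assert (Hphis : phi (sinv t) = g).
  { assert (H1 := proj2 (hg1 _ Htt0) (sinv_idem S t)).
    rewrite (hg2 _ _ Htt0) in H1. rewrite (ginv_uniq _ _ _ H1), Htg, ginvK. reflexivity. }
  assert (Hss : smul (sinv (sinv t)) (sinv t) = smul t (sinv t)).
  { rewrite sinvK. reflexivity. }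
  assert (Hyidem : smul y y = y) by exact (proj2 Hy).
  assert (Hxidem : smul x x = x) by exact (proj2 Hx).
  assert (Haidem : smul a a = a) by exact (proj2 Ha).
  assert (Hyaidem : smul (smul y a) (smul y a) = smul y a) by (apply idem_mul; assumption).
  assert (Hinter : inter (V (Idem (full S)) y) (V (Idem (full S)) a) = V (Idem (full S)) (smul y a)).
  { apply functional_extensionality. intro F. apply propositional_extensionality. split.
    - intros [[Ft Fy] [_ Fa]]. split; [exact Ft|].
      destruct Ft as [[_ [_ [_ [_ Fm]]]] _]. apply Fm; assumption.
    - intros [Ft Fya]. pose proof Ft as Ft'.
      destruct Ft' as [[_ [_ [_ [Fup _]]]] _]. split; split; try exact Ft.
      + apply (Fup (smul y a)); [exact Fya | split; [exact I | exact Hyidem] |].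
        exists a. split; [split; [exact I | exact Haidem] |]. apply idem_comm; assumption.
      + apply (Fup (smul y a)); [exact Fya | split; [exact I | exact Haidem] |].
        exists y. split; [split; [exact I | exact Hyidem] | reflexivity]. }
  assert (Hya_le : nle (smul y a) (smul (sinv (sinv t)) (sinv t))).
  { destruct Hat as [e0 [He0 He0a]]. exists (smul y e0). split.
    - split; [exact I|]. apply idem_mul; [exact Hyidem | exact (proj2 He0)].
    - rewrite Hss, He0a. ra. reflexivity. }
  rewrite Hinter, (hV (smul y a) (sinv t) (conj I Hyaidem) Hs0 Hphis Hya_le).
  set (s := sinv t) in *.
  set (p := smul (smul s (smul y a)) (sinv s)).
  assert (Hpidem : smul p p = p) by (apply conj_idem; exact Hyaidem).
  assert (Hxpidem : smul (smul x p) (smul x p) = smul x p) by (apply idem_mul; assumption).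
  assert (Key : smul x p = smul (smul (smul x s) y) (smul a (sinv s))).
  { unfold p. ra. reflexivity. }
  destruct (hyp x y s Hx Hy) as [s' [S1s' [e [He Hxsy]]]].
  destruct (classic (smul (smul x s) y = szero)) as [H0 | H0].
  - exists (empty S). split.
    + split.
      * split. split; intros F []. intros II U _ _. exists nil. intros F [].
      * intros II [HI _] _. exact HI.
    + intros F [[Ft Fx] [_ Fp]]. exfalso.
      destruct Ft as [[_ [_ [Fn0 [_ Fm]]]] _].
      apply Fn0. rewrite <- (smul0l S (smul a (sinv s))), <- H0, <- Key. apply Fm; assumption.
  - assert (Hx0 : x <> szero).
    { intro E0. apply H0. rewrite E0, !smul0l. reflexivity. }
    assert (Hy0 : y <> szero).
    { intro E0. apply H0. rewrite E0, smul0r. reflexivity. }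
    assert (Hxs0 : smul x s <> szero).
    { intro E0. apply H0. rewrite E0, smul0l. reflexivity. }
    assert (Hphi1 : phi (smul (smul x s) y) = g).
    { rewrite (hg2 _ _ H0), (hg2 _ _ Hxs0), (proj2 (hg1 _ Hx0) Hxidem),
        (proj2 (hg1 _ Hy0) Hyidem), gmul1l, gmul1r, Hphis. reflexivity. }
    rewrite Hxsy in H0, Hphi1.
    assert (He0 : e <> szero).
    { intro E0. apply H0. rewrite E0, smul0l. reflexivity. }
    assert (Hs'0 : s' <> szero).
    { intro E0. apply H0. rewrite E0, smul0r. reflexivity. }
    assert (Hphis' : phi s' = g).
    { rewrite (hg2 _ _ H0), (proj2 (hg1 _ He0) (proj2 He)), gmul1l in Hphi1. exact Hphi1. }
    assert (HzI : Idem S1 (smul s' (sinv s'))).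
    { split. apply Pmul; [exact S1s' | apply Pinv; exact S1s']. apply sinv_idem. }
    assert (Hzidem := sinv_idem S s').
    exists (V (Idem S1) (smul s' (sinv s'))). split.
    + split.
      * split.
        -- split. intros F [Ft _]; exact Ft.
           intros F [Ft Fz]. exists (cons (smul s' (sinv s')) nil), nil. split.
           ++ split; [exact Ft | split; [constructor; [exact Fz | constructor] | constructor]].
           ++ intros F' [Ft' [Hxs _]]. split; [exact Ft' | inversion Hxs; assumption].
        -- apply Topo.V_compact.
      * intros II _ Hgen. apply Hgen. exists (smul s' (sinv s')). split; [|reflexivity].
        split; [exact HzI|]. exists s'. split; [exact S1s'|]. split; [exact Hs'0|].
        split; [exact Hphis'|]. exists (smul s' (sinv s')). split; [split; [exact I | exact Hzidem]|].
        symmetry. exact Hzidem.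
    + destruct hiota as [_ [_ Hio]]. rewrite (Hio _ HzI).
      intros F [[Ft Fx] [_ Fp]]. split; [exact Ft|].
      pose proof Ft as Ft'. destruct Ft' as [[_ [_ [_ [Fup Fm]]]] _].
      apply (Fup (smul x p)); [apply Fm; assumption | split; [exact I | exact Hzidem] |].
      exists (smul x p). split; [split; [exact I | exact Hxpidem] |].
      rewrite (idem_comm S (smul x p) _ Hxpidem Hzidem).
      assert (Claim : smul e s' = smul (smul s' (sinv s')) (smul e s')).
      { transitivity (smul (smul e (smul s' (sinv s'))) s').
        - rewrite <- (smulA S e (smul s' (sinv s')) s'), sinv_inv1. reflexivity.
        - rewrite (idem_comm S e _ (proj2 He) Hzidem). ra. reflexivity. }
      rewrite Key, Hxsy, Claim. ra. rewrite inv1r. reflexivity.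
Qed.
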